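(* Let $m\ge 2$, let $\bar l(x)=\sum_{v=0}^{m} b_v x^v$ be a primitive polynomial of degree $m$ over $\mathbb{F}_2$, and let $l(x)=\sum_{v=0}^m b_v x^{2^v}$. Then exactly one of $c_0=\sum_{j\ge0} b_{2j}$ and $c_1=\sum_{j\ge 0} b_{2j+1}$ (with $b_u=0$ for $u>m$) is zero, and the polynomial $$\frac{l(x)^2+l(x)+1}{x^2+x+1}$$ is an irreducible polynomial of degree $2(2^m-1)$ over $\mathbb{F}_2$.
   Context: A primitive polynomial of degree $m$ over $\mathbb{F}_2$ is a monic irreducible polynomial of degree $m$ whose roots generate $\mathbb{F}_{2^m}^*$. *)

(* Defs.v *)
From HB Require Import structures.
From mathcomp Require Import all_boot all_order all_algebra.
Set Implicit Arguments. Unset Strict Implicit. Unset Printing Implicit Defensive.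
Import GRing.Theory.
Local Open Scope ring_scope.

(* A primitive polynomial of degree m over F_2: monic, irreducible, of degree m,
   and its root (the class of 'X in F_2[x]/(p) = F_{2^m}) has multiplicative
   order 2^m - 1, i.e. generates F_{2^m}^*.  The order of the root is expressed
   as: p divides X^(2^m-1) - 1 and p divides no X^k - 1 with 0 < k < 2^m - 1. *)
Definition primitive_poly (m : nat) (p : {poly 'F_2}) : Prop :=
  [/\ p \is monic, size p = m.+1, irreducible_poly p,
      p %| 'X^(2 ^ m - 1) - 1
    & forall k : nat, (0 < k < 2 ^ m - 1)%N -> ~~ (p %| 'X^k - 1)].

Definition linearized (p : {poly 'F_2}) : {poly 'F_2} :=
  \sum_(v < size p) p`_v *: 'X^(2 ^ v).

Definition c_even (p : {poly 'F_2}) : 'F_2 :=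
  \sum_(j < size p | ~~ odd j) p`_j.
Definition c_odd (p : {poly 'F_2}) : 'F_2 :=
  \sum_(j < size p | odd j) p`_j.

(* Main.v *)
From HB Require Import structures.
From mathcomp Require Import all_boot all_order all_algebra all_field.
Require Import Defs.
Set Implicit Arguments. Unset Strict Implicit. Unset Printing Implicit Defensive.
Import GRing.Theory.
Local Open Scope ring_scope.

Lemma F2_cases (x : 'F_2) : x = 0 \/ x = 1.
Proof. case: x => [[|[|n]] H]; [left|right|]; try by apply: val_inj. by []. Qed.

Lemma F2_2 : (2%:R : 'F_2) = 0.
Proof. by apply: val_inj. Qed.

Lemma F2sq (c : 'F_2) : c ^+ 2 = c.
Proof. by case: (F2_cases c) => ->; rewrite ?expr0n ?expr1n. Qed.

Lemma F2_11 : (1 + 1 : 'F_2) = 0.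
Proof. by apply: val_inj. Qed.

Lemma F2_neq0 (c : 'F_2) : c != 0 -> c = 1.
Proof. by case: (F2_cases c) => -> //; rewrite eqxx. Qed.

Section Lin.
Variable A : comAlgType 'F_2.

Lemma char2 : (2%:R : A) = 0.
Proof. by rewrite -scaler_nat F2_2 scale0r. Qed.

Lemma addrr (a : A) : a + a = 0.
Proof. by rewrite -mulr2n -mulr_natr char2 mulr0. Qed.

Lemma oppr_c2 (a : A) : - a = a.
Proof. by apply/eqP; rewrite -subr_eq0 -opprD addrr oppr0. Qed.

Lemma sqrD2 (a b : A) : (a + b) ^+ 2 = a ^+ 2 + b ^+ 2.
Proof. by rewrite sqrrD -mulr_natr char2 mulr0 addr0. Qed.

Lemma frobD n (a b : A) : (a + b) ^+ (2 ^ n) = a ^+ (2 ^ n) + b ^+ (2 ^ n).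
Proof.
elim: n a b => [|n IH] a b; first by rewrite !expr1.
by rewrite expnS !exprM sqrD2 IH.
Qed.

Lemma frob0 n : (0 : A) ^+ (2 ^ n) = 0.
Proof. by rewrite expr0n expn_eq0. Qed.

Lemma frobZ n (c : 'F_2) (a : A) : (c *: a) ^+ (2 ^ n) = c *: a ^+ (2 ^ n).
Proof.
rewrite exprZn; congr (_ *: _).
by case: (F2_cases c) => ->; rewrite ?expr1n // expr0n expn_eq0.
Qed.

Lemma frob_sum n I (r : seq I) (P : pred I) (F : I -> A) :
  (\sum_(i <- r | P i) F i) ^+ (2 ^ n) = \sum_(i <- r | P i) F i ^+ (2 ^ n).
Proof. exact: (big_morph (fun x => x ^+ (2 ^ n)) (frobD n) (frob0 n)). Qed.

Definition lin (g : {poly 'F_2}) (y : A) : A :=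
  \sum_(i < size g) g`_i *: y ^+ (2 ^ i).

Lemma linE n (g : {poly 'F_2}) (y : A) : (size g <= n)%N -> lin g y = \sum_(i < n) g`_i *: y ^+ (2 ^ i).
Proof.
move=> Hn; rewrite /lin (big_ord_widen n (fun i => g`_i *: y ^+ (2 ^ i)) Hn).
rewrite [LHS]big_mkcond /=; apply: eq_bigr => i _.
by case: ltnP => // H; rewrite nth_default // scale0r.
Qed.

Lemma lin0p (y : A) : lin 0 y = 0.
Proof. by rewrite /lin size_poly0 big_ord0. Qed.

Lemma linD (g h : {poly 'F_2}) (y : A) : lin (g + h) y = lin g y + lin h y.
Proof.
pose n := maxn (size g) (size h).
rewrite !(@linE n) ?leq_maxl ?leq_maxr //; last first.
  by rewrite (leq_trans (size_polyD _ _)).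
by rewrite -big_split /=; apply: eq_bigr => i _; rewrite coefD scalerDl.
Qed.

Lemma linZ c (g : {poly 'F_2}) (y : A) : lin (c *: g) y = c *: lin g y.
Proof.
rewrite (@linE (size g)) ?size_scale_leq // /lin scaler_sumr.
by apply: eq_bigr => i _; rewrite coefZ scalerA.
Qed.

Lemma linN (g : {poly 'F_2}) (y : A) : lin (- g) y = - lin g y.
Proof. by rewrite -scaleN1r linZ scaleN1r. Qed.

Lemma linB (g h : {poly 'F_2}) (y : A) : lin (g - h) y = lin g y - lin h y.
Proof. by rewrite linD linN. Qed.

Lemma linC c (y : A) : lin c%:P y = c *: y.
Proof. by rewrite (@linE 1) ?size_polyC_leq1 // big_ord1 coefC /= expr1. Qed.

Lemma sq_sum I (r : seq I) (P : pred I) (F : I -> A) :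
  (\sum_(i <- r | P i) F i) ^+ 2 = \sum_(i <- r | P i) F i ^+ 2.
Proof. exact: (big_morph (fun x => x ^+ 2) sqrD2 (expr0n _ 2)). Qed.

Lemma sqZ (c : 'F_2) (a : A) : (c *: a) ^+ 2 = c *: a ^+ 2.
Proof. by rewrite exprZn F2sq. Qed.

Lemma lin_frob (g : {poly 'F_2}) (y : A) : (lin g y) ^+ 2 = lin g (y ^+ 2).
Proof.
rewrite /lin sq_sum; apply: eq_bigr => i _.
by rewrite sqZ -!exprM mulnC.
Qed.

Lemma linX (g : {poly 'F_2}) (y : A) : lin ('X * g) y = (lin g y) ^+ 2.
Proof.
have Hs : (size ('X * g)%R <= (size g).+1)%N.
  by rewrite (leq_trans (size_polyMleq _ _)) // size_polyX.
rewrite (@linE (size g).+1 _ _ Hs) big_ord_recl coefXM eqxx scale0r add0r.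
rewrite /lin sq_sum; apply: eq_bigr => i _.
have -> : (lift ord0 i : nat) = i.+1 by []. by rewrite coefXM /= sqZ -exprM expnS mulnC.
Qed.

Lemma lin_mul (g h : {poly 'F_2}) (y : A) : lin (g * h) y = lin g (lin h y).
Proof.
elim/poly_ind: g h => [|p c IH] h; first by rewrite mul0r !lin0p.
rewrite mulrDl -mulrA [X in p * X]mulrC linD IH mul_polyC linZ.
rewrite linD linC [p * 'X]mulrC linX lin_frob; congr (_ + _).
by rewrite [h * _]mulrC linX.
Qed.

Lemma lin_y0 (g : {poly 'F_2}) : lin g 0 = 0.
Proof. by rewrite /lin big1 // => i _; rewrite frob0 scaler0. Qed.

Lemma linXn k (y : A) : lin 'X^k y = y ^+ (2 ^ k).
Proof.
rewrite (@linE k.+1) ?size_polyXn // big_ord_recr /= big1 ?add0r.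
  by rewrite coefXn eqxx scale1r.
by move=> i _; rewrite coefXn /= ltn_eqF ?ltn_ord // scale0r.
Qed.

Lemma lin1 (y : A) : lin 1 y = y.
Proof. by rewrite -(expr0 'X) linXn expr1. Qed.

Lemma lin_pow k (g : {poly 'F_2}) (y : A) : lin g (y ^+ (2 ^ k)) = (lin g y) ^+ (2 ^ k).
Proof. by rewrite -linXn -lin_mul mulrC lin_mul linXn. Qed.

End Lin.

Lemma lin_in_qpoly (h : {poly 'F_2}) (g y : {poly 'F_2}) :
  in_qpoly h (lin g y) = lin g (in_qpoly h y).
Proof.
rewrite /lin (big_morph (in_qpoly h) (@in_qpolyD _ h) (@in_qpoly0 _ h)).
by apply: eq_bigr => i _; rewrite in_qpolyZ rmorphXn.
Qed.

Section Gen2.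
Variable A : comAlgType 'F_2.

Lemma cube_root_pow (z : A) : z ^+ 2 + z + 1 = 0 ->
  forall i, z ^+ (2 ^ i) = if odd i then z ^+ 2 else z.
Proof.
move=> hz.
have z2 : z ^+ 2 = z + 1.
  by apply/eqP; rewrite -subr_eq0 oppr_c2 addrA hz.
have z4 : (z ^+ 2) ^+ 2 = z.
  by rewrite z2 sqrD2 z2 expr1n -addrA addrr addr0.
elim=> [|i IH]; first by rewrite expr1.
rewrite expnS mulnC exprM IH /=; case: (odd i) => //=.
Qed.

Lemma cube_root_sq (z : A) : z ^+ 2 + z + 1 = 0 -> (z ^+ 2) ^+ 2 + z ^+ 2 + 1 = 0.
Proof.
move=> hz; have := cube_root_pow hz 2; rewrite /= -exprM /= => ->.
by rewrite (addrC z).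
Qed.

Lemma x4x (b : A) : b ^+ 4 + b = b * (b + 1) * (b ^+ 2 + b + 1).
Proof.
have e1 : b * (b + 1) = b ^+ 2 + b by rewrite mulrDr mulr1 expr2.
rewrite e1 mulrDr mulr1 -expr2 sqrD2 -exprM [RHS]addrA -(addrA (b ^+ (2 * 2))).
by rewrite addrr addr0.
Qed.

Lemma lin_split (g : {poly 'F_2}) (w : A) : w ^+ 2 + w + 1 = 0 ->
  lin g w = c_even g *: w + c_odd g *: w ^+ 2.
Proof.
move=> hw; rewrite /lin /c_even /c_odd.
under eq_bigr => i _ do rewrite (cube_root_pow hw) fun_if.
rewrite (bigID (fun i : 'I_ _ => odd i)) /= addrC !scaler_suml.
congr (_ + _); apply: eq_bigr => i.
  by move/negbTE => ->.
by move=> ->.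
Qed.

End Gen2.

Lemma in_qpoly_eq0 (h p : {poly 'F_2}) : h \is monic -> (1 < size h)%N ->
  (in_qpoly h p == 0) = (h %| p).
Proof.
move=> hm hs; rewrite Pdiv.Idomain.dvdpE /Pdiv.Ring.rdvdp -val_eqE /=.
by rewrite /mk_monic hs hm.
Qed.

Lemma deriv_lin (g : {poly 'F_2}) : (lin g 'X)^`() = (g`_0)%:P.
Proof.
rewrite (@linE _ (size g).+1) // big_ord_recl /=.
rewrite derivD (big_morph (@deriv _) (@derivD _) (@deriv0 _)) big1 ?addr0.
  by rewrite expr1 derivZ derivX alg_polyC.
move=> i _; rewrite derivZ derivXn.
have -> : (2 ^ bump 0 i = 2 ^ i * 2)%N by rewrite /bump /= add1n expnSr.
by rewrite mulrnA mulr2n addrr scaler0.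
Qed.

Definition h3 : {poly 'F_2} := 'X^2 + 'X + 1.

Lemma h3_size : size h3 = 3%N.
Proof.
rewrite /h3 -addrA -polyC1 size_polyDl ?size_polyXn // size_XaddC.
by []. Qed.

Lemma h3_monic : h3 \is monic.
Proof.
apply/monicP; rewrite /h3 -addrA -polyC1 lead_coefDl ?lead_coefXn //.
by rewrite size_XaddC size_polyXn.
Qed.

Lemma h3_div (lbar : {poly 'F_2}) : c_even lbar + c_odd lbar = 1 ->
  h3 %| (lin lbar 'X) ^+ 2 + lin lbar 'X + 1.
Proof.
move=> hc; rewrite -in_qpoly_eq0 ?h3_monic ?h3_size //.
set w := in_qpoly h3 'X.
have hw : w ^+ 2 + w + 1 = 0.
  have : in_qpoly h3 ('X^2 + 'X + 1) = 0.
    by apply/eqP; rewrite in_qpoly_eq0 ?h3_monic ?h3_size // dvdpp.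
  by rewrite !rmorphD rmorphXn rmorph1.
rewrite !rmorphD rmorphXn rmorph1 /= lin_in_qpoly -/w (lin_split _ hw).
case: (F2_cases (c_even lbar)) hc => -> hc.
  rewrite add0r in hc; rewrite hc scale0r add0r scale1r.
  by apply/eqP; rewrite cube_root_sq.
case: (F2_cases (c_odd lbar)) hc => -> hc; last first.
  by move: hc; rewrite F2_11 => /esym/eqP; rewrite oner_eq0.
by rewrite scale0r addr0 scale1r hw.
Qed.

Lemma irr_monicF2 (r : {poly 'F_2}) : irreducible_poly r -> r \is monic.
Proof.
by move=> rI; apply/monicP; apply: F2_neq0; rewrite lead_coef_eq0 irredp_neq0.
Qed.

Lemma exists_irr (p : {poly 'F_2}) : (1 < size p)%N ->
  exists2 r, irreducible_poly r & r %| p.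
Proof.
move=> Hp; have [n Hn] : exists n, (size p <= n)%N by exists (size p).
elim: n p Hn Hp => [|n IH] p Hn Hp; first by have := leq_trans Hp Hn.
case: (boolP (irreducibleb p)) => [/irreducibleP pI|pNI]; first by exists p.
move: pNI; rewrite /irreducibleb Hp /= => /forallPn [q].
rewrite negb_imply -Pdiv.Idomain.dvdpE -ltnNge => /andP [qd qs].
have qn : (size q <= n)%N.
  have := size_npoly q; rewrite -ltnS (ltn_predK Hp) => H.
  by rewrite -ltnS (leq_trans H Hn).
have [r rI rq] := IH q qn qs; exists r => //; exact: dvdp_trans rq qd.
Qed.

Lemma prim_div m (lbar : {poly 'F_2}) k : (0 < 2 ^ m - 1)%N ->
  primitive_poly m lbar -> lbar %| 'X^k - 1 -> (2 ^ m - 1 %| k)%N.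
Proof.
move=> Npos [_ _ _ hN hmin] hk; set N := (2 ^ m - 1)%N in Npos hN hmin *.
rewrite /dvdn; apply/eqP; set s := (k %% N)%N.
have e : 'X^k - 1 = 'X^s * ('X^(k %/ N * N) - 1) + ('X^s - 1) :> {poly 'F_2}.
  by rewrite mulrBr mulr1 -exprD addrA subrK addnC -divn_eq.
have hq : lbar %| 'X^(k %/ N * N) - 1.
  by rewrite mulnC exprM subrX1; apply: dvdp_mulr.
rewrite e dvdp_addr ?dvdp_mull // in hk.
case: (posnP s) => [//|spos].
by have := hmin s; rewrite spos ltn_pmod //= hk => /(_ isT).
Qed.

Lemma irr_noroot (p : {poly 'F_2}) x : irreducible_poly p -> (2 < size p)%N ->
  p.[x] = 1.
Proof.
move=> pI ps; apply: F2_neq0; apply/negP => /eqP px.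
have : ('X - x%:P) %| p by rewrite -root_factor_theorem; apply/eqP.
case/(irredp_XsubCP pI) => [|/eqp_size]; last by rewrite size_XsubC => e; rewrite -e in ps.
by rewrite -size_poly_eq1 size_XsubC.
Qed.

Lemma c_sum (p : {poly 'F_2}) : c_even p + c_odd p = p.[1].
Proof.
rewrite /c_even /c_odd horner_coef [RHS](bigID (fun j : 'I_ _ => odd j)) addrC /=.
by congr (_ + _); apply: eq_bigr => i _; rewrite expr1n mulr1.
Qed.

Lemma core m (lbar r : {poly 'F_2}) : (2 <= m)%N -> primitive_poly m lbar ->
  irreducible_poly r ->
  r %| ((lin lbar 'X) ^+ 2 + lin lbar 'X + 1) %/ h3 ->
  ((2 * (2 ^ m - 1)).+1 <= size r)%N.
Proof.
move=> hm hp rI rQ.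
have lsz : size lbar = m.+1 by case: hp.
have lI : irreducible_poly lbar by case: hp.
have l0 : lbar`_0 = 1.
  by rewrite -horner_coef0 (irr_noroot _ lI) // lsz ltnS.
set l := lin lbar 'X.
set F := l ^+ 2 + l + 1.
set Q := F %/ h3.
have hc : c_even lbar + c_odd lbar = 1 by rewrite c_sum (irr_noroot _ lI) // lsz ltnS.
have h3F : h3 %| F := h3_div hc.
have FQ : F = Q * h3 by rewrite divpK.
have rF : r %| F by rewrite FQ dvdp_mulr.
have rmon := irr_monicF2 rI.
have rs : (1 < size r)%N by case: rI.
pose rMI : monic_irreducible_poly r := (rI, rmon).
pose K := {poly %/ r with rMI}.
pose b : K := in_qpoly r 'X.
pose w : K := lin lbar b.
have hw : w ^+ 2 + w + 1 = 0.
  have : in_qpoly r F = 0 by apply/eqP; rewrite in_qpoly_eq0.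
  by rewrite !rmorphD rmorphXn rmorph1 /= lin_in_qpoly.
have dF : F^`() = 1.
  by rewrite /F !derivD deriv_exp mulr2n addrr add0r /l deriv_lin l0 -polyC1 derivC addr0.
have dh3 : h3^`() = 1.
  by rewrite /h3 !derivD derivXn derivX /= expr1 mulr2n addrr add0r -polyC1 derivC addr0.
have rQ0 : in_qpoly r Q = 0 by apply/eqP; rewrite in_qpoly_eq0.
have hb3 : b ^+ 2 + b + 1 != 0.
  apply/eqP => hb.
  have e : in_qpoly r (Q^`() * h3 + Q) = 1.
    have e' : Q^`() * h3 + Q = 1 by rewrite -dF FQ derivM dh3 mulr1.
    by rewrite e' rmorph1.
  rewrite rmorphD rmorphM /= rQ0 addr0 /h3 !rmorphD rmorphXn rmorph1 /= in e.
  move: e; rewrite -/b hb mulr0 => /eqP; rewrite eq_sym oner_eq0 //.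
have card : #|K| = (2 ^ (size r).-1)%N by rewrite card_qfpoly card_Fp.
have bd : b ^+ (2 ^ (size r).-1) = b by rewrite -card expf_card.
have Npos : (0 < 2 ^ m - 1)%N.
  by rewrite subn_gt0 -{1}(expn0 2) ltn_exp2l // (leq_trans _ hm).
suff claim : forall k, b ^+ (2 ^ k) = b -> (2 * (2 ^ m - 1) %| k)%N.
  have := claim _ bd; move/dvdn_leq => H.
  rewrite -(ltn_predK rs) ltnS; apply: H.
  by case: (size r) rs => [|[|]].
move=> k hk.
have wk : w ^+ (2 ^ k) = w by rewrite /w -lin_pow hk.
have ek : ~~ odd k.
  apply/negP => ok; rewrite (cube_root_pow hw) ok in wk.
  by move: hw; rewrite wk addrr add0r => /eqP; rewrite oner_eq0.
pose d := lin ('X^2 + 1) b.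
have dE : d = b ^+ 4 + b by rewrite /d linD linXn lin1.
have ld : lin lbar d = 0.
  by rewrite /d -lin_mul mulrC lin_mul linD linXn lin1 -/w (cube_root_pow hw 2) /= addrr.
have kd : lin ('X^k - 1) d = 0.
  by rewrite /d -lin_mul mulrC lin_mul linB linXn lin1 hk subrr lin_y0.
have sq1 : b ^+ 2 = b -> False.
  move=> bb; have : w ^+ 2 = w by rewrite /w lin_frob bb.
  by move=> ww; move: hw; rewrite ww addrr add0r => /eqP; rewrite oner_eq0.
have dn0 : d != 0.
  rewrite dE x4x !mulf_neq0 //.
    by apply/eqP => b0; apply: sq1; rewrite b0 expr0n.
  apply/eqP => b1; apply: sq1.
  have -> : b = 1 by apply/eqP; rewrite -[1]oppr_c2 -addr_eq0 b1.
  by rewrite expr1n.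
have lk : lbar %| 'X^k - 1.
  apply/negPn/negP => nd.
  have cop : coprimep lbar ('X^k - 1) by rewrite irreducible_poly_coprime.
  case/Bezout_coprimepP: cop => [[u v]] /= e.
  have : lin (u * lbar + v * ('X^k - 1)) d = 0.
    by rewrite linD !lin_mul ld kd !lin_y0 addr0.
  have := eqp_size e; rewrite size_poly1 => /eqP /size_poly1P [c c0 ->].
  by rewrite linC (F2_neq0 c0) scale1r => /eqP; rewrite (negPf dn0).
have Nk := prim_div Npos hp lk.
rewrite Gauss_dvd ?coprime2n ?dvdn2 ?ek ?Nk //.
have m0 : m != 0%N by rewrite -lt0n (leq_trans _ hm).
by rewrite oddB ?expn_gt0 // oddX (negPf m0).
Qed.

From mathcomp Require Import zify.

Lemma size_lin m (lbar : {poly 'F_2}) : size lbar = m.+1 -> lbar \is monic ->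
  size (lin lbar 'X) = (2 ^ m).+1.
Proof.
move=> lsz lm.
rewrite (@linE _ m.+1) ?lsz // big_ord_recr /=.
have -> : lbar`_m = 1 by move/monicP: lm; rewrite lead_coefE lsz.
rewrite scale1r addrC size_polyDl size_polyXn // ltnS.
apply: (big_ind (fun q : {poly 'F_2} => size q <= 2 ^ m)%N) => [|x y hx hy|i _].
- by rewrite size_poly0.
- by rewrite (leq_trans (size_polyD _ _)) // geq_max hx hy.
- rewrite (leq_trans (size_scale_leq _ _)) // size_polyXn /=.
  by rewrite ltn_exp2l.
Qed.

Lemma size_Q m (lbar : {poly 'F_2}) : size lbar = m.+1 -> lbar \is monic ->
  size (((lin lbar 'X) ^+ 2 + lin lbar 'X + 1) %/ h3) = (2 * (2 ^ m - 1)).+1.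
Proof.
move=> lsz lm; have sl := size_lin lsz lm.
have s2 : size ((lin lbar 'X) ^+ 2) = (2 ^ m * 2).+1.
  have := size_exp (lin lbar 'X) 2; rewrite sl /= => e.
  rewrite -e prednK //; case: (size _) e => //= e.
  by move: e; have := expn_gt0 2 m; lia.
have sF : size ((lin lbar 'X) ^+ 2 + lin lbar 'X + 1) = (2 ^ m * 2).+1.
  rewrite -addrA size_polyDl ?s2 //.
  rewrite ltnS (leq_trans (size_polyD _ _)) // geq_max sl size_poly1.
  have := expn_gt0 2 m => ?; apply/andP; split; lia.
rewrite size_divp; last by rewrite -size_poly_eq0 h3_size.
rewrite sF h3_size; have := expn_gt0 2 m; lia.
Qed.

Theorem mainTheorem9 (m : nat) (lbar : {poly 'F_2}) :
  (2 <= m)%N -> primitive_poly m lbar ->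
  let l := linearized lbar in
  ((c_even lbar == 0) (+) (c_odd lbar == 0)) /\
  ('X^2 + 'X + 1 %| l ^+ 2 + l + 1) /\
  irreducible_poly ((l ^+ 2 + l + 1) %/ ('X^2 + 'X + 1)) /\
  size ((l ^+ 2 + l + 1) %/ ('X^2 + 'X + 1)) = (2 * (2 ^ m - 1)).+1.
Proof.
move=> hm hp l.
have lsz : size lbar = m.+1 by case: hp.
have lm : lbar \is monic by case: hp.
have lI : irreducible_poly lbar by case: hp.
have hc : c_even lbar + c_odd lbar = 1.
  by rewrite c_sum (irr_noroot _ lI) // lsz ltnS.
have lE : l = lin lbar 'X by [].
have sQ := size_Q lsz lm.
rewrite -/h3 lE.
split.
  case: (F2_cases (c_even lbar)) hc => -> hc; case: (F2_cases (c_odd lbar)) hc => -> hc //.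
  all: try (by move: hc; rewrite F2_11 => /eqP; rewrite eq_sym oner_eq0).
  all: try (by move: hc; rewrite addr0 => /eqP; rewrite eq_sym oner_eq0).
  all: try (by rewrite eqxx oner_eq0).
split; first exact: h3_div hc.
split; last exact: sQ.
set Q := _ %/ h3 in sQ *.
have Qn0 : Q != 0 by rewrite -size_poly_eq0 sQ.
split; first by rewrite sQ ltnS muln_gt0 /= subn_gt0 -{1}(expn0 2) ltn_exp2l // (leq_trans _ hm).
move=> d ds dQ.
have dn0 : d != 0 by apply/eqP => d0; move: dQ Qn0; rewrite d0 dvd0p => ->.
have ds1 : (1 < size d)%N.
  move: ds dn0; rewrite -size_poly_eq0; case: (size d) => [|[|]] //.
have [r rI rd] := exists_irr ds1.
have rQ : r %| Q := dvdp_trans rd dQ.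
have := core hm hp rI rQ; rewrite -sQ => h.
rewrite -dvdp_size_eqp // eqn_leq dvdp_leq //=.
by rewrite (leq_trans h) // dvdp_leq.
Qed.
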